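(* Let $(M,\nabla_0)$ be a hom-connection with respect to a differential graded algebra $\Omega A$, with extensions $\nabla_n:\mathrm{Hom}_A(\Omega^{n+1}A,M)\to\mathrm{Hom}_A(\Omega^nA,M)$, $\nabla_n(f)(\omega)=\nabla_0(f\omega)+(-1)^{n+1}f(d\omega)$. Then for all $n>0$: (a) $\nabla_{n-1}\circ\nabla_n:\mathrm{Hom}_A(\Omega^{n+1}A,M)\to\mathrm{Hom}_A(\Omega^{n-1}A,M)$ is right $A$-linear; (b) with $F=\nabla_0\circ\nabla_1:\mathrm{Hom}_A(\Omega^2A,M)\to M$ and $\Theta_n:\mathrm{Hom}_A(\Omega^{n+1}A,M)\to\mathrm{Hom}_A(\Omega^{n-1}A,\mathrm{Hom}_A(\Omega^2A,M))$ defined by $\Theta_n(f)(\omega_1)(\omega_2)=f(\omega_1\omega_2)$, one has $$\nabla_{n-1}\circ\nabla_n=\mathrm{Hom}_A(\Omega^{n-1}A,F)\circ\Theta_n,$$ i.e. $(\nabla_{n-1}\circ\nabla_n)(f)(\omega_1)=F(\Theta_n(f)(\omega_1))$ for all $f$ and $\omega_1\in\Omega^{n-1}A$.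
   Context: All algebras are associative and unital over a field $k$. $\Omega A=\bigoplus_{n\ge0}\Omega^nA$, $\Omega^0A=A$, is a differential graded algebra with degree-one differential $d$, $d^2=0$, satisfying the graded Leibniz rule. $M$ is a right $A$-module; $\mathrm{Hom}_A$ denotes right $A$-linear maps; $\mathrm{Hom}_A(\Omega^kA,M)$ is a right $A$-module via $(fa)(\omega)=f(a\omega)$, and $\mathrm{Hom}_A(A,M)\cong M$ via $f\mapsto f(1)$. For $\omega\in\Omega^nA$ and $f\in\mathrm{Hom}_A(\Omega^{n+m}A,M)$, $f\omega\in\mathrm{Hom}_A(\Omega^mA,M)$ is $(f\omega)(\omega')=f(\omega\omega')$. A hom-connection is a $k$-linear map $\nabla_0:\mathrm{Hom}_A(\Omega^1A,M)\to M$ with $\nabla_0(fa)=\nabla_0(f)a+f(da)$ for all $f$ and $a\in A$. *)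

(* Defs.v *)
From HB Require Import structures.
From mathcomp Require Import all_boot all_order all_algebra.
Set Implicit Arguments. Unset Strict Implicit. Unset Printing Implicit Defensive.
Import GRing.Theory.
Local Open Scope ring_scope.

(* Encoding: the DGA Omega A = (+)_n Omega^n A is a k-algebra T together with
   the family of homogeneous components Om n (k-subspaces of T), Om 0%N = A,
   and the differential d : T -> T. *)
Section Defs.
Variables (k : fieldType) (T : algType k) (Om : nat -> pred T) (d : T -> T).

Record is_dga : Prop := IsDGA {
  dga_zero : forall n, 0 \in Om n;
  dga_subspace : forall n (c : k) x y, x \in Om n -> y \in Om n -> c *: x + y \in Om n;
  dga_one : 1 \in Om 0%N;
  dga_mul : forall n m x y, x \in Om n -> y \in Om m -> x * y \in Om (n + m);
  dga_decomp : forall x, exists (N : nat) (s : nat -> T),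
      (forall i, s i \in Om i) /\ x = \sum_(i < N) s i;
  dga_direct : forall (N : nat) (s : nat -> T), (forall i, s i \in Om i) ->
      \sum_(i < N) s i = 0 -> forall i, (i < N)%N -> s i = 0;
  dga_d_lin : forall (c : k) x y, d (c *: x + y) = c *: d x + d y;
  dga_d_deg : forall n x, x \in Om n -> d x \in Om n.+1;
  dga_dd : forall x, d (d x) = 0;
  dga_leibniz : forall n m x y, x \in Om n -> y \in Om m ->
      d (x * y) = d x * y + (-1) ^+ n *: (x * d y)
}.

Variables (M : lmodType k) (act : M -> T -> M).

Record is_rmod : Prop := IsRmod {
  act_addl : forall m1 m2 a, a \in Om 0%N -> act (m1 + m2) a = act m1 a + act m2 a;
  act_addr : forall m a b, a \in Om 0%N -> b \in Om 0%N -> act m (a + b) = act m a + act m b;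
  act_mul : forall m a b, a \in Om 0%N -> b \in Om 0%N -> act (act m a) b = act m (a * b);
  act_one : forall m, act m 1 = m;
  act_scalel : forall (c : k) m a, a \in Om 0%N -> act (c *: m) a = c *: act m a;
  act_scaler : forall (c : k) m a, a \in Om 0%N -> act m (c *: a) = c *: act m a
}.

(* f : T -> M represents an element of Hom_A(Om^n A, M) (only its values on
   Om n matter). *)
Definition is_homA (n : nat) (f : T -> M) : Prop :=
  (forall x y, x \in Om n -> y \in Om n -> f (x + y) = f x + f y) /\
  (forall x a, x \in Om n -> a \in Om 0%N -> f (x * a) = act (f x) a).

Record is_hom_connection (nabla0 : (T -> M) -> M) : Prop := IsHomConn {
  hc_wd : forall f g, is_homA 1%N f -> is_homA 1%N g ->
      (forall x, x \in Om 1%N -> f x = g x) -> nabla0 f = nabla0 g;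
  hc_lin : forall (c : k) f g, is_homA 1%N f -> is_homA 1%N g ->
      nabla0 (fun w => c *: f w + g w) = c *: nabla0 f + nabla0 g;
  hc_leibniz : forall f a, is_homA 1%N f -> a \in Om 0%N ->
      nabla0 (fun w => f (a * w)) = act (nabla0 f) a + f (d a)
}.

Definition nabla_ext (nabla0 : (T -> M) -> M) (n : nat) (f : T -> M) : T -> M :=
  fun w => nabla0 (fun w' => f (w * w')) + (-1) ^+ n.+1 *: f (d w).

End Defs.

(* Main.v *)
Require Import Defs.
From HB Require Import structures.
From mathcomp Require Import all_boot all_order all_algebra.
From Stdlib Require Import FunctionalExtensionality.
Import GRing.Theory.
Local Open Scope ring_scope.
Set Implicit Arguments.

Section Aux.
Variables (k : fieldType) (T : algType k) (Om : nat -> pred T) (d : T -> T)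
  (M : lmodType k) (act : M -> T -> M) (nabla0 : (T -> M) -> M).
Hypotheses (hdga : is_dga Om d) (hmod : is_rmod Om act)
  (hconn : is_hom_connection Om d act nabla0).

Lemma OmD i x y : x \in Om i -> y \in Om i -> x + y \in Om i.
Proof. move=> hx hy; have := dga_subspace hdga 1 hx hy; by rewrite scale1r. Qed.
Lemma OmZ i (c : k) x : x \in Om i -> c *: x \in Om i.
Proof. move=> hx; have := dga_subspace hdga c hx (dga_zero hdga i); by rewrite addr0. Qed.
Lemma dD x y : d (x + y) = d x + d y.
Proof. have := dga_d_lin hdga 1 x y; by rewrite !scale1r. Qed.

Lemma homA0 i F : is_homA Om act i F -> F 0 = 0.
Proof.
move=> [hA _]; have h := hA 0 0 (dga_zero hdga i) (dga_zero hdga i).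
rewrite addr0 -{1}[F 0]addr0 in h; by move/addrI: h.
Qed.

Lemma homAZ i F (c : k) x : is_homA Om act i F -> x \in Om i -> F (c *: x) = c *: F x.
Proof.
move=> [_ hM] hx.
have e : c *: x = x * (c *: 1) by rewrite -scalerAr mulr1.
rewrite e hM //; last exact: OmZ (dga_one hdga).
by rewrite (act_scaler hmod) ?(dga_one hdga) // (act_one hmod).
Qed.

Lemma homA_ext i F G : is_homA Om act i F ->
  (forall x, x \in Om i -> F x = G x) -> is_homA Om act i G.
Proof.
move=> [hA hM] e; split.
  by move=> x y hx hy; rewrite -!e ?OmD // hA.
move=> x a hx ha; rewrite -!e //; first exact: hM.
by have := dga_mul hdga hx ha; rewrite addn0.
Qed.

Lemma homA_lin i (c : k) F G : is_homA Om act i F -> is_homA Om act i G ->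
  is_homA Om act i (fun x => c *: F x + G x).
Proof.
move=> [hA hM] [gA gM]; split.
  by move=> x y hx hy; rewrite hA // gA // scalerDr addrACA.
move=> x a hx ha; rewrite hM // gM // (act_addl hmod) // (act_scalel hmod) //.
Qed.

Lemma homA_comp {p j w F} : (forall x, x \in Om j -> w * x \in Om p) ->
  is_homA Om act p F -> is_homA Om act j (fun x => F (w * x)).
Proof.
move=> hw [hA hM]; split.
  by move=> x y hx hy; rewrite mulrDr hA ?hw.
by move=> x a hx ha; rewrite mulrA hM ?hw.
Qed.

Lemma nabla1_hom F : is_homA Om act 2 F -> is_homA Om act 1 (nabla_ext d nabla0 1 F).
Proof.
move=> hF.
have hFc : forall x, x \in Om 1 -> is_homA Om act 1 (fun u => F (x * u)).
  move=> x hx; apply: (homA_comp (p := 2)) hF => u hu; exact: (dga_mul hdga hx hu).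
have [hA hM] := hF.
split.
- move=> x y hx hy; rewrite /nabla_ext.
  have e1 : nabla0 (fun w'' => F ((x + y) * w'')) =
            nabla0 (fun u => 1 *: F (x * u) + F (y * u)).
    apply: (hc_wd hconn).
    + apply: homA_ext (homA_lin 1 (hFc x hx) (hFc y hy)) _.
      move=> u hu; rewrite scale1r mulrDl hA //.
      exact: (dga_mul hdga hx hu). exact: (dga_mul hdga hy hu).
    + exact: homA_lin (hFc x hx) (hFc y hy).
    + move=> u hu; rewrite scale1r mulrDl hA //.
      exact: (dga_mul hdga hx hu). exact: (dga_mul hdga hy hu).
  rewrite e1 (hc_lin hconn); try exact: hFc.
  rewrite scale1r dD hA; last exact: (dga_d_deg hdga hy).
    by rewrite scalerDr addrACA.
  exact: (dga_d_deg hdga hx).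
- move=> x a hx ha; rewrite /nabla_ext.
  have e1 : (fun w'' => F (x * a * w'')) = (fun u => (fun v => F (x * v)) (a * u)).
    by apply: functional_extensionality => u; rewrite mulrA.
  rewrite e1 (@hc_leibniz _ _ _ _ _ _ _ hconn (fun v => F (x * v)) a); try exact: hFc x hx; try exact: ha.
  have m1 : x * d a \in Om 2 by exact: (dga_mul hdga hx (dga_d_deg hdga ha)).
  have m2 : d x * a \in Om 2 by exact: (dga_mul hdga (dga_d_deg hdga hx) ha).
  have m3 : d x \in Om 2 by exact: (dga_d_deg hdga hx).
  rewrite (dga_leibniz hdga (n := 1) (m := 0) hx ha) expr1.
  rewrite (hA _ _ m2 (OmZ _ m1)) (hM _ _ m3 ha) (homAZ (-1) hF m1).
  rewrite sqrrN expr1n !scale1r scaleN1r (act_addl hmod) //.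
  by rewrite -addrA [F (x * d a) + _]addrC subrK.
Qed.

Lemma partb m f w : is_homA Om act m.+2 f -> w \in Om m ->
  nabla_ext d nabla0 m (nabla_ext d nabla0 m.+1 f) w =
  nabla0 (nabla_ext d nabla0 1 (fun w2 => f (w * w2))).
Proof.
move=> hf hw.
set Fw := fun u => f (w * u).
have hFw : is_homA Om act 2 Fw.
  apply: (homA_comp (p := m.+2)) hf => u hu.
  by have := dga_mul hdga hw hu; rewrite addn2.
have hH2 : is_homA Om act 1 (fun u => f (d w * u)).
  apply: (homA_comp (p := m.+2)) hf => u hu.
  by have := dga_mul hdga (dga_d_deg hdga hw) hu; rewrite addn1.
have [hA hM] := hf.
have key : forall w', w' \in Om 1 -> nabla_ext d nabla0 m.+1 f (w * w') =
   (-1) ^+ m.+2 *: f (d w * w') + nabla_ext d nabla0 1 Fw w'.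
  move=> w' h'; rewrite /nabla_ext /Fw (dga_leibniz hdga hw h').
  have m1 : d w * w' \in Om m.+2.
    by have := dga_mul hdga (dga_d_deg hdga hw) h'; rewrite addn1.
  have m2 : w * d w' \in Om m.+2.
    by have := dga_mul hdga hw (dga_d_deg hdga h'); rewrite addn2.
  rewrite hA ?OmZ // (homAZ _ hf) // scalerDr scalerA.
  have e : (-1) ^+ m.+2 * (-1) ^+ m = 1 :> k.
    by rewrite !exprS !mulN1r opprK -exprMn mulrNN mulr1 expr1n.
  rewrite e scale1r sqrrN expr1n scale1r.
  have e2 : (fun w'' => f (w * w' * w'')) = (fun w'' => f (w * (w' * w''))).
    by apply: functional_extensionality => u; rewrite mulrA.
  by rewrite e2 addrCA.
have hG : is_homA Om act 1
   (fun w' => (-1) ^+ m.+2 *: f (d w * w') + nabla_ext d nabla0 1 Fw w').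
  exact: homA_lin hH2 (nabla1_hom hFw).
rewrite {1}/nabla_ext.
rewrite (hc_wd hconn (g := fun w' => (-1) ^+ m.+2 *: f (d w * w') +
                                     nabla_ext d nabla0 1 Fw w')) //; last first.
  apply: homA_ext hG _ => x hx; by rewrite key.
rewrite (hc_lin hconn) //; last exact: nabla1_hom.
rewrite /nabla_ext (dga_dd hdga) (homA0 hf) scaler0 addr0.
rewrite exprS mulN1r scaleNr addrAC.
by rewrite -/(nabla_ext d nabla0 1 Fw) addNr add0r.
Qed.

End Aux.
Unset Implicit Arguments.

Theorem proposition3p3 (k : fieldType) (T : algType k) (Om : nat -> pred T)
  (d : T -> T) (M : lmodType k) (act : M -> T -> M) (nabla0 : (T -> M) -> M)
  (hdga : is_dga Om d) (hmod : is_rmod Om act)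
  (hconn : is_hom_connection Om d act nabla0)
  (n : nat) (hn : (0 < n)%N) :
  (* (a) nabla_{n-1} o nabla_n is right A-linear *)
  ((forall f g, is_homA Om act n.+1 f -> is_homA Om act n.+1 g ->
      forall w, w \in Om n.-1 ->
      nabla_ext d nabla0 n.-1 (nabla_ext d nabla0 n (fun x => f x + g x)) w =
      nabla_ext d nabla0 n.-1 (nabla_ext d nabla0 n f) w +
      nabla_ext d nabla0 n.-1 (nabla_ext d nabla0 n g) w) /\
   (forall f a, is_homA Om act n.+1 f -> a \in Om 0%N ->
      forall w, w \in Om n.-1 ->
      nabla_ext d nabla0 n.-1 (nabla_ext d nabla0 n (fun x => f (a * x))) w =
      nabla_ext d nabla0 n.-1 (nabla_ext d nabla0 n f) (a * w))) /\
  (* (b) nabla_{n-1} o nabla_n = Hom_A(Om^{n-1}, F) o Theta_n, F = nabla0 o nabla_1 *)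
  (forall f, is_homA Om act n.+1 f ->
      forall w1, w1 \in Om n.-1 ->
      nabla_ext d nabla0 n.-1 (nabla_ext d nabla0 n f) w1 =
      nabla0 (nabla_ext d nabla0 1%N (fun w2 => f (w1 * w2)))).
Proof.
case: n hn => [//|m] _ /=.
split; last by move=> f hf w1 hw; exact: (partb hdga hmod hconn).
split.
- move=> f g hf hg w hw.
  have hfg : is_homA Om act m.+2 (fun x => f x + g x).
    apply: (homA_ext hdga _ (homA_lin hmod 1 hf hg)) => x _; by rewrite scale1r.
  rewrite !(partb hdga hmod hconn) //.
  have hFw : forall F, is_homA Om act m.+2 F -> is_homA Om act 2 (fun u => F (w * u)).
    move=> F hF; apply: (homA_comp (p := m.+2)) hF => u hu.
    by have := dga_mul hdga hw hu; rewrite addn2.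
  have hN := fun F hF => nabla1_hom hdga hmod hconn (hFw F hF).
  rewrite -[nabla0 (nabla_ext d nabla0 1 (fun w2 => f (w * w2)))]scale1r.
  rewrite -(hc_lin hconn 1 (hN _ hf) (hN _ hg)).
  apply: (hc_wd hconn).
  + exact: (nabla1_hom hdga hmod hconn (hFw _ hfg)).
  + by apply: (homA_lin hmod); apply: hN.
  + move=> x hx; rewrite scale1r /nabla_ext.
    have hc : forall F, is_homA Om act m.+2 F ->
       is_homA Om act 1 (fun u => F (w * (x * u))).
      move=> F hF; apply: (homA_comp (p := 2)) (hFw _ hF) => u hu.
      exact: (dga_mul hdga hx hu).
    have e : (fun w'' => f (w * (x * w'')) + g (w * (x * w''))) =
             (fun u => 1 *: f (w * (x * u)) + g (w * (x * u))).
      by apply: functional_extensionality => u; rewrite scale1r.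
    rewrite e (hc_lin hconn 1 (hc _ hf) (hc _ hg)) scale1r scalerDr.
    by rewrite addrACA.
- move=> f a hf ha w hw.
  have hfa : is_homA Om act m.+2 (fun x => f (a * x)).
    apply: (homA_comp (p := m.+2)) hf => u hu.
    by have := dga_mul hdga ha hu; rewrite add0n.
  have haw : a * w \in Om m by have := dga_mul hdga ha hw; rewrite add0n.
  rewrite (partb hdga hmod hconn _ hfa hw) (partb hdga hmod hconn _ hf haw).
  congr (nabla0 (nabla_ext d nabla0 1 _)).
  by apply: functional_extensionality => u; rewrite mulrA.
Qed.
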